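(* Let $R\subset S$ be an FCP ring extension. Then $\pounds[R,S]\leq \ell[R,S]\leq \mathrm{L}_R(S/R)$.
   Context: All rings are commutative with identity. $[R,S]$ is the lattice of $R$-subalgebras of $S$ (meet = intersection, join = product). FCP: every chain in $[R,S]$ is finite. $T\subset U$ minimal means $[T,U]=\{T,U\}$; atoms of $[R,S]$ are the $T$ with $R\subset T$ minimal; the socle $\mathcal S[R,S]$ is the product of all atoms. The Loewy series: $S_0=R$, $S_{i+1}=\mathcal S[S_i,S]$ while $S_i\neq S$; $\pounds[R,S]$ is the least $n$ with $S_n=S$. $\ell[R,S]$ is the supremum of lengths of chains in $[R,S]$, and $\mathrm{L}_R(S/R)$ is the length of the $R$-module $S/R$. *)

(* Defs.v *)
From HB Require Import structures.
From mathcomp Require Import all_boot all_algebra.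
From Stdlib Require Import List.
Set Implicit Arguments. Unset Strict Implicit. Unset Printing Implicit Defensive.
Import GRing.Theory.
Local Open Scope ring_scope.

Section RingExt.
Variable S : comPzRingType.

Definition subset_of (A B : S -> Prop) := forall x, A x -> B x.
Definition psubset_of (A B : S -> Prop) := subset_of A B /\ ~ subset_of B A.

Definition is_subring (T : S -> Prop) :=
  T 1 /\ (forall x y, T x -> T y -> T (x - y)) /\ (forall x y, T x -> T y -> T (x * y)).

Definition interm (R T : S -> Prop) := is_subring T /\ subset_of R T.

Definition minimal_ext (T U : S -> Prop) :=
  psubset_of T U /\
  forall V, interm T V -> subset_of V U -> V = T \/ V = U.

Definition atom (T U : S -> Prop) := is_subring U /\ minimal_ext T U.

Definition gen_subring (A : S -> Prop) : S -> Prop :=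
  fun x => forall U, is_subring U -> subset_of A U -> U x.

(* socle of [T,S]: product (join = generated subring) of all atoms of [T,S]
   (T is included as well, which changes nothing when atoms exist, and makes
    the socle of [S,S] equal to S) *)
Definition socle (T : S -> Prop) : S -> Prop :=
  gen_subring (fun x => T x \/ exists U, atom T U /\ U x).

Fixpoint loewy (R : S -> Prop) (n : nat) : S -> Prop :=
  match n with
  | O => R
  | n.+1 => socle (loewy R n)
  end.

Definition whole : S -> Prop := fun _ => True.

(* n <= £[R,S]   (£[R,S] = least n with S_n = S, or +oo) *)
Definition loewy_ge (R : S -> Prop) (n : nat) :=
  forall m, (m < n)%N -> loewy R m <> whole.

Definition ring_chain_len (R : S -> Prop) (n : nat) :=
  exists T : nat -> S -> Prop,
    (forall i, (i <= n)%N -> interm R (T i)) /\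
    (forall i, (i < n)%N -> psubset_of (T i) (T i.+1)).

Definition is_chain (R : S -> Prop) (C : (S -> Prop) -> Prop) :=
  (forall T, C T -> interm R T) /\
  (forall T U, C T -> C U -> subset_of T U \/ subset_of U T).
Definition FCP (R : S -> Prop) :=
  forall C, is_chain R C -> exists s : list (S -> Prop), forall T, C T -> In T s.

(* R-submodules of S containing R, i.e. R-submodules of S/R *)
Definition Rsubmod (R M : S -> Prop) :=
  M 0 /\ (forall x y, M x -> M y -> M (x - y)) /\ (forall r x, R r -> M x -> M (r * x)).

Definition mod_chain_len (R : S -> Prop) (n : nat) :=
  exists M : nat -> S -> Prop,
    (forall i, (i <= n)%N -> Rsubmod R (M i) /\ subset_of R (M i)) /\
    (forall i, (i < n)%N -> psubset_of (M i) (M i.+1)).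

(* sup {n | P n} <= sup {n | Q n} in nat \cup {+oo} *)
Definition sup_le (P Q : nat -> Prop) := forall n, P n -> exists2 m, Q m & (n <= m)%N.

End RingExt.

(* Main.v *)
Require Import Defs.
From mathcomp Require Import all_boot all_algebra.
From Stdlib Require FinFun.
From Stdlib Require Import List FunctionalExtensionality PropExtensionality ClassicalEpsilon Classical.
Import GRing.Theory.
Local Open Scope ring_scope.

Section Aux.
Variable S : comPzRingType.

Lemma ext_eq (A B : S -> Prop) : subset_of A B -> subset_of B A -> A = B.
Proof.
move=> h1 h2; apply: functional_extensionality => x.
apply: propositional_extensionality; split; [exact: h1|exact: h2].
Qed.

Lemma gen_subring_sub (A : S -> Prop) : is_subring (gen_subring A).
Proof.
split; first by move=> U [h1 _].
split.
- move=> x y hx hy U hU hA; case: (hU) => _ [hs _]; apply: hs; [exact: hx|exact: hy].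
- move=> x y hx hy U hU hA; case: (hU) => _ [_ hm]; apply: hm; [exact: hx|exact: hy].
Qed.

Lemma gen_subring_incl (A : S -> Prop) : subset_of A (gen_subring A).
Proof. by move=> x hx U _ hA; apply: hA. Qed.

Lemma whole_sub : is_subring (@whole S).
Proof. by []. Qed.

Lemma loewy_interm (R : S -> Prop) n : is_subring R -> interm R (loewy R n).
Proof.
move=> hR; elim: n => [|n [hs hi]] /=; first by split => //; move=> x.
split; first exact: gen_subring_sub.
move=> x hx; apply: gen_subring_incl; left; exact: hi.
Qed.

Definition above (T U : S -> Prop) := is_subring U /\ psubset_of T U.

Lemma atom_exists (R T : S -> Prop) : FCP R -> interm R T -> T <> @whole S ->
  exists U, atom T U.
Proof.
move=> hF [hTs hRT] hTw.
apply: NNPP => hno.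
have step : forall U, above T U -> exists V, above T V /\ psubset_of V U.
  move=> U [hUs [hTU hUT]].
  apply: NNPP => hn; apply: hno; exists U; split => //; split; first by split.
  move=> V [hVs hTV] hVU.
  apply: NNPP => hVV; apply: hn; exists V.
  have nVT : ~ subset_of V T.
    by move=> h; apply: hVV; left; apply: ext_eq.
  have nUV : ~ subset_of U V.
    by move=> h; apply: hVV; right; apply: ext_eq.
  by split; split.
have h0 : above T (@whole S).
  split; first exact: whole_sub.
  split; first by [].
  by move=> h; apply: hTw; apply: ext_eq.
pose f (u : {U | above T U}) : {U | above T U} :=
  let e := constructive_indefinite_description _ (step _ (proj2_sig u)) in
  exist _ (proj1_sig e) (proj1 (proj2_sig e)).
have hf : forall u, psubset_of (proj1_sig (f u)) (proj1_sig u).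
  move=> u; rewrite /f /=.
  by case: (constructive_indefinite_description _ _) => V [].
pose W k := proj1_sig (iter k f (exist _ _ h0)).
have hW : forall k, above T (W k) by move=> k; exact: (proj2_sig (iter k f _)).
have hWs : forall k, psubset_of (W k.+1) (W k) by move=> k; exact: hf.
have hWle : forall i d, subset_of (W (i + d)%N) (W i).
  move=> i; elim=> [|d IH]; first by rewrite addn0.
  rewrite addnS => x hx; apply: IH; exact: (proj1 (hWs _)) .
have hWlt : forall i j, (i < j)%N -> ~ subset_of (W i) (W j).
  move=> i j hij h; case: (hWs i) => _ hn; apply: hn.
  have := hWle i.+1 (j - i.+1)%N; rewrite subnKC // => h2.
  by move=> x hx; apply: h2; apply: h.
have hC : is_chain R (fun X => exists k, X = W k).
  split.
  - move=> X [k ->]; case: (hW k) => hs [hTW _]; split => //.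
    by move=> x hx; apply: hTW; apply: hRT.
  - move=> X Y [i ->] [j ->]; case: (leqP i j) => hij.
    + right; have := hWle i (j - i)%N; by rewrite subnKC.
    + left; have := hWle j (i - j)%N; rewrite subnKC //; exact: ltnW.
have [s hs] := hF _ hC.
have hinj : FinFun.Injective W.
  move=> i j hij; case: (ltngtP i j) => // h.
  - by exfalso; apply: (hWlt i j h); rewrite hij.
  - by exfalso; apply: (hWlt j i h); rewrite hij.
have hnd : NoDup (map W (List.seq 0 (length s).+1)).
  apply: FinFun.Injective_map_NoDup => //; exact: seq_NoDup.
have hin : incl (map W (List.seq 0 (length s).+1)) s.
  move=> X /in_map_iff [k [<- _]]; apply: hs; by exists k.
have := NoDup_incl_length hnd hin.
rewrite length_map length_seq => /PeanoNat.Nat.nle_succ_diag_l //.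
Qed.

End Aux.

Theorem proposition8p22 (S : comPzRingType) (R : S -> Prop) :
  is_subring R -> FCP R ->
  sup_le (loewy_ge R) (ring_chain_len R) /\
  sup_le (ring_chain_len R) (mod_chain_len R).
Proof.
move=> hR hF; split.
- move=> n hn; exists n => //; exists (loewy R); split.
    by move=> i _; apply: loewy_interm.
  move=> i hi /=.
  have hI := @loewy_interm S R i hR.
  have [U hA] := @atom_exists S _ _ hF hI (hn i hi); have [hUs [[hTU hUT] _]] := hA.
  split.
  + by move=> x hx; apply: gen_subring_incl; left.
  + move=> h; apply: hUT => x hx; apply: h.
    move=> V _ hV; apply: hV; right; exists U; split => //.
- move=> n [T [hT hTs]]; exists n => //; exists T; split => //.
  move=> i hi; have [[h1 [hs hm]] hRT] := hT i hi.
  split => //; split.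
  + by rewrite -(subrr 1); apply: hs.
  + split => // r x hr hx; apply: hm => //; exact: hRT.
Qed.
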